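(* Let $\mathbb M$ be an $\mathcal R$-module. Then $\mathbb M$ is dually separated if and only if for every $\mathcal R$-module $\mathbb N$, setting $\mathbb M'=\mathbb N^*$, the map $$\operatorname{Hom}_{\mathcal R}(\mathbb M,\mathbb M')\to\operatorname{Hom}_R(\mathbb M(R),\mathbb M'(R)),\qquad f\mapsto f_R,$$ is injective.
   Context: $R$ is a commutative ring. An $\mathcal R$-module is a covariant functor $\mathbb M$ from commutative $R$-algebras to abelian groups with each $\mathbb M(S)$ an $S$-module, functorially; morphisms are natural transformations that are $S$-linear on each $S$. For an $R$-module $N$, $\mathcal N(S)=N\otimes_R S$. $\mathbb M_{|S}$ denotes restriction to $S$-algebras, and $\mathbb M^*(S)=\operatorname{Hom}_{\mathcal S}(\mathbb M_{|S},\mathcal S)$. $\mathbb M$ is dually separated if for every commutative $R$-algebra $S$ the map $\mathbb M^*(S)\to\operatorname{Hom}_R(\mathbb M(R),S)$, $w\mapsto w_R$, is injective (equivalently the natural morphism $\mathbb M^*\to\mathbb M_{qc}^*$ is a monomorphism, where $\mathbb M_{qc}(S)=\mathbb M(R)\otimes_R S$). *)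

(* Defs.v *)
From HB Require Import structures.
From mathcomp Require Import all_boot all_algebra.
Set Implicit Arguments. Unset Strict Implicit. Unset Printing Implicit Defensive.
Import GRing.Theory.
Local Open Scope ring_scope.

Definition is_ring_hom (A B : comPzRingType) (f : A -> B) : Prop :=
  (forall x y, f (x + y) = f x + f y) /\ (forall x y, f (x * y) = f x * f y)
  /\ f 1 = 1.

Record ralg (R : comPzRingType) := RAlg {
  ralg_car :> comPzRingType;
  ralg_str : R -> ralg_car;
  ralg_strP : is_ring_hom ralg_str }.
Arguments ralg_str {R} S r : rename.

Record rhom (R : comPzRingType) (S T : ralg R) := Hom {
  hom_fun :> S -> T;
  hom_ringP : is_ring_hom hom_fun;
  hom_strP : forall r, hom_fun (ralg_str S r) = ralg_str T r }.

Lemma id_is_ring_hom (A : comPzRingType) : is_ring_hom (@id A).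
Proof. by split; [|split]. Qed.

Lemma comp_is_ring_hom (A B C : comPzRingType) (g : B -> C) (f : A -> B) :
  is_ring_hom g -> is_ring_hom f -> is_ring_hom (g \o f).
Proof.
move=> [g1 [g2 g3]] [f1 [f2 f3]]; split; [|split] => /=.
- by move=> x y; rewrite f1 g1.
- by move=> x y; rewrite f2 g2.
- by rewrite f3 g3.
Qed.

Definition base_alg (R : comPzRingType) : ralg R :=
  @RAlg R R id (id_is_ring_hom R).

Definition id_hom (R : comPzRingType) (S : ralg R) : rhom S S :=
  @Hom R S S id (id_is_ring_hom S) (fun r => erefl).

Lemma comp_hom_strP (R : comPzRingType) (S T U : ralg R) (g : rhom T U)
  (f : rhom S T) r : (g \o f) (ralg_str S r) = ralg_str U r.
Proof. by rewrite /= hom_strP hom_strP. Qed.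

Definition comp_hom (R : comPzRingType) (S T U : ralg R) (g : rhom T U)
  (f : rhom S T) : rhom S U :=
  @Hom R S U (g \o f) (comp_is_ring_hom (hom_ringP g) (hom_ringP f))
       (comp_hom_strP g f).

Definition str_hom (R : comPzRingType) (S : ralg R) : rhom (base_alg R) S :=
  @Hom R (base_alg R) S (ralg_str S) (ralg_strP S) (fun r => erefl).

(* R-modules in the functorial sense: covariant functors M from commutative
   R-algebras to abelian groups, each M(S) an S-module, M(f) f-semilinear. *)
Record RMod (R : comPzRingType) := {
  mcar : ralg R -> Type;
  mzero : forall S, mcar S;
  madd : forall S, mcar S -> mcar S -> mcar S;
  mopp : forall S, mcar S -> mcar S;
  mscale : forall S : ralg R, S -> mcar S -> mcar S;
  mmap : forall S T : ralg R, rhom S T -> mcar S -> mcar T;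
  maddA : forall S (x y z : mcar S), madd x (madd y z) = madd (madd x y) z;
  maddC : forall S (x y : mcar S), madd x y = madd y x;
  madd0 : forall S (x : mcar S), madd (mzero S) x = x;
  maddN : forall S (x : mcar S), madd (mopp x) x = mzero S;
  mscale1 : forall S (x : mcar S), mscale 1 x = x;
  mscaleA : forall (S : ralg R) (a b : S) (x : mcar S), mscale a (mscale b x) = mscale (a * b) x;
  mscaleDr : forall (S : ralg R) (a : S) (x y : mcar S),
      mscale a (madd x y) = madd (mscale a x) (mscale a y);
  mscaleDl : forall (S : ralg R) (a b : S) (x : mcar S),
      mscale (a + b) x = madd (mscale a x) (mscale b x);
  mmap_add : forall S T (f : rhom S T) (x y : mcar S),
      mmap f (madd x y) = madd (mmap f x) (mmap f y);
  mmap_scale : forall S T (f : rhom S T) (a : S) (x : mcar S),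
      mmap f (mscale a x) = mscale (f a) (mmap f x);
  mmap_id : forall S (x : mcar S), mmap (id_hom S) x = x;
  mmap_comp : forall S T U (g : rhom T U) (f : rhom S T) (x : mcar S),
      mmap (comp_hom g f) x = mmap g (mmap f x) }.
Arguments mcar {R} r S : rename.
Arguments mzero {R r} S : rename.
Arguments madd {R r S} : rename.
Arguments mopp {R r S} : rename.
Arguments mscale {R r S} : rename.
Arguments mmap {R r S T} : rename.

(* Raw data of an element w of M^*(S) = Hom_S(M_{|S}, S): for every
   S-algebra (T, i : S -> T) a map w_(T,i) : M(T) -> T. *)
Definition dual_family (R : comPzRingType) (M : RMod R) (S : ralg R) :=
  forall (T : ralg R) (i : rhom S T), mcar M T -> T.

(* w is a morphism of S-modules M_{|S} -> S: T-linear components, natural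
   w.r.t. morphisms of S-algebras g : (T,i) -> (T',i') (i.e. g \o i = i'). *)
Definition is_dual_elt (R : comPzRingType) (M : RMod R) (S : ralg R)
  (w : dual_family M S) : Prop :=
  (forall (T : ralg R) (i : rhom S T) (x y : mcar M T), w T i (madd x y) = w T i x + w T i y) /\
  (forall (T : ralg R) (i : rhom S T) (a : T) (x : mcar M T), w T i (mscale a x) = a * w T i x) /\
  (forall (T T' : ralg R) (i : rhom S T) (i' : rhom S T') (g : rhom T T'),
     (forall s, g (i s) = i' s) ->
     forall x : mcar M T, w T' i' (mmap g x) = g (w T i x)).

(* M is dually separated: for every S, w |-> w_R (i.e. m |-> w_S(m (x) 1)),
   M^*(S) -> Hom_R(M(R), S), is injective. *)
Definition dually_separated (R : comPzRingType) (M : RMod R) : Prop :=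
  forall (S : ralg R) (w w' : dual_family M S),
    is_dual_elt w -> is_dual_elt w' ->
    (forall m : mcar M (base_alg R),
        w S (id_hom S) (mmap (str_hom S) m) = w' S (id_hom S) (mmap (str_hom S) m)) ->
    forall (T : ralg R) (i : rhom S T) (x : mcar M T), w T i x = w' T i x.

(* A morphism of R-modules F : M -> N^*, written out: F_S(m) in N^*(S) for
   each m in M(S); F_S is S-linear (N^*(S) has pointwise addition and
   (a.w)_(T,i) = i(a) w_(T,i)); F is natural, where for g : S -> S',
   N^*(g)(w)_(T,i') = w_(T, i' \o g). *)
Definition is_hom_to_dual (R : comPzRingType) (M N : RMod R)
  (F : forall S : ralg R, mcar M S -> dual_family N S) : Prop :=
  (forall (S : ralg R) (m : mcar M S), is_dual_elt (F S m)) /\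
  (forall (S : ralg R) (m m' : mcar M S) (T : ralg R) (i : rhom S T) (n : mcar N T),
     F S (madd m m') T i n = F S m T i n + F S m' T i n) /\
  (forall (S : ralg R) (a : S) (m : mcar M S) (T : ralg R) (i : rhom S T) (n : mcar N T),
     F S (mscale a m) T i n = i a * F S m T i n) /\
  (forall (S S' : ralg R) (g : rhom S S') (m : mcar M S) (T : ralg R)
          (i : rhom S' T) (j : rhom S T),
     (forall s, i (g s) = j s) ->
     forall n : mcar N T, F S' (mmap g m) T i n = F S m T j n).

(* Main.v *)
Require Import Defs.
From Stdlib Require Import FunctionalExtensionality ProofIrrelevance.
From HB Require Import structures.
From mathcomp Require Import all_boot all_algebra.
Import GRing.Theory.

Section Aux.
Context {R : comPzRingType}.
Local Open Scope ring_scope.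

Lemma rhom_ext {S T : ralg R} (f g : rhom S T) : (forall x, f x = g x) -> f = g.
Proof.
case: f => f fr fs; case: g => g gr gs /= H.
have E : f = g by apply: functional_extensionality.
subst g. by rewrite (proof_irrelevance _ fr gr) (proof_irrelevance _ fs gs).
Qed.

Lemma comp_idl {S T : ralg R} (f : rhom S T) : comp_hom (id_hom T) f = f.
Proof. exact: rhom_ext. Qed.
Lemma comp_idr {S T : ralg R} (f : rhom S T) : comp_hom f (id_hom S) = f.
Proof. exact: rhom_ext. Qed.
Lemma comp_assoc {S T U V : ralg R} (h : rhom U V) (g : rhom T U) (f : rhom S T) :
  comp_hom h (comp_hom g f) = comp_hom (comp_hom h g) f.
Proof. exact: rhom_ext. Qed.

Lemma hom0 {A B : comPzRingType} {f : A -> B} : is_ring_hom f -> f 0 = 0.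
Proof. move=> [f1 _]; apply: (@addrI _ (f 0)); by rewrite -f1 !addr0. Qed.

Lemma homN {A B : comPzRingType} {f : A -> B} : is_ring_hom f -> forall x, f (- x) = - f x.
Proof.
move=> Hf x; have [f1 _] := Hf; apply: (@addrI _ (f x)).
by rewrite -f1 !subrr (hom0 Hf).
Qed.

Context {M : RMod R}.

Definition df0 (S : ralg R) : dual_family M S := fun T i x => 0.
Definition dfadd {S : ralg R} (p q : dual_family M S) : dual_family M S :=
  fun T i x => p T i x + q T i x.
Definition dfopp {S : ralg R} (p : dual_family M S) : dual_family M S :=
  fun T i x => - p T i x.
Definition dfscale {S : ralg R} (a : S) (p : dual_family M S) : dual_family M S :=
  fun T i x => i a * p T i x.
Definition dfmap {S S' : ralg R} (h : rhom S S') (p : dual_family M S) : dual_family M S' :=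
  fun T i x => p T (comp_hom i h) x.

Lemma df0P S : is_dual_elt (df0 S).
Proof.
split; [|split]; rewrite /df0.
- by move=> *; rewrite addr0.
- by move=> *; rewrite mulr0.
- by move=> T T' i i' g _ x; rewrite (hom0 (hom_ringP g)).
Qed.

Lemma dfaddP {S : ralg R} (p q : dual_family M S) : is_dual_elt p -> is_dual_elt q -> is_dual_elt (dfadd p q).
Proof.
move=> [p1 [p2 p3]] [q1 [q2 q3]]; split; [|split]; rewrite /dfadd.
- by move=> T i x y; rewrite p1 q1 addrACA.
- by move=> T i a x; rewrite p2 q2 mulrDr.
- move=> T T' i i' g E x; rewrite (p3 _ _ _ _ _ E) (q3 _ _ _ _ _ E).
  by case: (hom_ringP g) => g1 _; rewrite g1.
Qed.

Lemma dfoppP {S : ralg R} (p : dual_family M S) : is_dual_elt p -> is_dual_elt (dfopp p).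
Proof.
move=> [p1 [p2 p3]]; split; [|split]; rewrite /dfopp.
- by move=> T i x y; rewrite p1 opprD.
- by move=> T i a x; rewrite p2 mulrN.
- move=> T T' i i' g E x; rewrite (p3 _ _ _ _ _ E).
  by rewrite (homN (hom_ringP g)).
Qed.

Lemma dfscaleP {S : ralg R} (a : S) (p : dual_family M S) : is_dual_elt p -> is_dual_elt (dfscale a p).
Proof.
move=> [p1 [p2 p3]]; split; [|split]; rewrite /dfscale.
- by move=> T i x y; rewrite p1 mulrDr.
- by move=> T i b x; rewrite p2 mulrCA.
- move=> T T' i i' g E x; rewrite (p3 _ _ _ _ _ E).
  by case: (hom_ringP g) => _ [g2 _]; rewrite g2 E.
Qed.

Lemma dfmapP {S S' : ralg R} (h : rhom S S') (p : dual_family M S) : is_dual_elt p -> is_dual_elt (dfmap h p).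
Proof.
move=> [p1 [p2 p3]]; split; [|split]; rewrite /dfmap.
- by move=> T i x y; rewrite p1.
- by move=> T i b x; rewrite p2.
- move=> T T' i i' g E x; exact: (p3 T T' (comp_hom i h) (comp_hom i' h) g (fun s => E (h s))).
Qed.

Definition Dpred (T : ralg R) (p : dual_family M T * dual_family M T) : Prop :=
  is_dual_elt p.1 /\ is_dual_elt p.2 /\
  forall T' (g : rhom T T') (m : mcar M (base_alg R)),
    p.1 T' g (mmap (str_hom T') m) = p.2 T' g (mmap (str_hom T') m).

Definition Ncar (T : ralg R) := {p | Dpred T p}.

Lemma N0P T : Dpred T (df0 T, df0 T).
Proof. by split; [exact: df0P|split; [exact: df0P|]]. Qed.
Definition N0 T : Ncar T := exist _ _ (N0P T).

Lemma NaddP {T} (p q : Ncar T) : Dpred T (dfadd (proj1_sig p).1 (proj1_sig q).1, dfadd (proj1_sig p).2 (proj1_sig q).2).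
Proof.
case: p => [[a b] [Ha [Hb Hab]]]; case: q => [[c d] [Hc [Hd Hcd]]] /=.
split; [exact: dfaddP|split; [exact: dfaddP|]] => T' g m /=.
by rewrite /dfadd; move: (Hab T' g m) (Hcd T' g m) => /= -> ->.
Qed.
Definition Nadd T (p q : Ncar T) : Ncar T := exist _ _ (NaddP p q).

Lemma NoppP {T} (p : Ncar T) : Dpred T (dfopp (proj1_sig p).1, dfopp (proj1_sig p).2).
Proof.
case: p => [[a b] [Ha [Hb Hab]]] /=.
split; [exact: dfoppP|split; [exact: dfoppP|]] => T' g m /=.
by rewrite /dfopp; move: (Hab T' g m) => /= ->.
Qed.
Definition Nopp T (p : Ncar T) : Ncar T := exist _ _ (NoppP p).

Lemma NscaleP {T : ralg R} (a : T) (p : Ncar T) : Dpred T (dfscale a (proj1_sig p).1, dfscale a (proj1_sig p).2).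
Proof.
case: p => [[a' b] [Ha [Hb Hab]]] /=.
split; [exact: dfscaleP|split; [exact: dfscaleP|]] => T' g m /=.
by rewrite /dfscale; move: (Hab T' g m) => /= ->.
Qed.
Definition Nscale (T : ralg R) (a : T) (p : Ncar T) : Ncar T := exist _ _ (NscaleP a p).

Lemma NmapP {T T'} (h : rhom T T') (p : Ncar T) : Dpred T' (dfmap h (proj1_sig p).1, dfmap h (proj1_sig p).2).
Proof.
case: p => [[a b] [Ha [Hb Hab]]] /=.
split; [exact: dfmapP|split; [exact: dfmapP|]] => T'' g m /=.
by rewrite /dfmap; move: (Hab T'' (comp_hom g h) m) => /= ->.
Qed.
Definition Nmap T T' (h : rhom T T') (p : Ncar T) : Ncar T' := exist _ _ (NmapP h p).

Lemma Neq {T} (p q : Ncar T) :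
  (forall T' g x, (proj1_sig p).1 T' g x = (proj1_sig q).1 T' g x) ->
  (forall T' g x, (proj1_sig p).2 T' g x = (proj1_sig q).2 T' g x) -> p = q.
Proof.
case: p => [[a b] Pa]; case: q => [[c d] Pc] /= H1 H2.
have E1 : a = c.
  apply: functional_extensionality_dep => T'; apply: functional_extensionality_dep => g.
  apply: functional_extensionality => x; exact: H1.
have E2 : b = d.
  apply: functional_extensionality_dep => T'; apply: functional_extensionality_dep => g.
  apply: functional_extensionality => x; exact: H2.
subst c d; by rewrite (proof_irrelevance _ Pa Pc).
Qed.

Definition NMod : RMod R.
refine {| mcar := Ncar; mzero := N0; madd := Nadd; mopp := Nopp;
          mscale := Nscale; mmap := Nmap |}.
- by move=> S x y z; apply: Neq => * /=; rewrite /dfadd addrA.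
- by move=> S x y; apply: Neq => * /=; rewrite /dfadd addrC.
- by move=> S x; apply: Neq => * /=; rewrite /dfadd /df0 add0r.
- by move=> S x; apply: Neq => * /=; rewrite /dfadd /dfopp /df0 addNr.
- move=> S x; apply: Neq => T' g y /=; rewrite /dfscale;
  by case: (hom_ringP g) => _ [_ ->]; rewrite mul1r.
- move=> S a b x; apply: Neq => T' g y /=; rewrite /dfscale;
  by case: (hom_ringP g) => _ [-> _]; rewrite mulrA.
- by move=> S a x y; apply: Neq => T' g z /=; rewrite /dfscale /dfadd mulrDr.
- move=> S a b x; apply: Neq => T' g y /=; rewrite /dfscale /dfadd;
  by case: (hom_ringP g) => -> _; rewrite mulrDl.
- by move=> S T f x y; apply: Neq.
- by move=> S T f a x; apply: Neq.
- by move=> S x; apply: Neq => T' g y /=; rewrite /dfmap comp_idr.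
- by move=> S T U g f x; apply: Neq => T' k y /=; rewrite /dfmap comp_assoc.
Defined.

Definition sel {T} (b : bool) (n : Ncar T) : dual_family M T :=
  if b then (proj1_sig n).1 else (proj1_sig n).2.

Lemma selP {T} b (n : Ncar T) : is_dual_elt (sel b n).
Proof. case: n => [[a c] H]; have [Ha [Hc _]] := H; by case: b. Qed.

Definition Fsel (b : bool) : forall S : ralg R, mcar M S -> dual_family NMod S :=
  fun S m T i n => sel b n T (id_hom T) (mmap i m).

Lemma FselP b : is_hom_to_dual (Fsel b).
Proof.
split; [|split; [|split]].
- move=> S m; split; [|split].
  + by move=> T i n n'; case: b.
  + by move=> T i a n; case: b.
  + move=> T T' i i' g E n; rewrite /Fsel.
    have [_ [_ p3]] := selP b n.
    rewrite -(p3 T T' (id_hom T) (comp_hom (id_hom T') g) g (fun _ => erefl)).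
    rewrite -mmap_comp (rhom_ext (comp_hom g i) i' E).
    by clear p3; case: b.
- move=> S m m' T i n; rewrite /Fsel mmap_add.
  have [p1 _] := selP b n; exact: p1.
- move=> S a m T i n; rewrite /Fsel mmap_scale.
  have [_ [p2 _]] := selP b n; exact: p2.
- move=> S S' g m T i j E n; rewrite /Fsel -mmap_comp.
  by rewrite (rhom_ext (comp_hom i g) j E).
Qed.

Lemma njP {S T} (i : rhom S T) (w w' : dual_family M S) : is_dual_elt w -> is_dual_elt w' ->
  (forall m, w S (id_hom S) (mmap (str_hom S) m) = w' S (id_hom S) (mmap (str_hom S) m)) ->
  Dpred T (dfmap i w, dfmap i w').
Proof.
move=> Hw Hw' Hag; split; [exact: dfmapP|split; [exact: dfmapP|]] => T' g m /=.
rewrite /dfmap.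
have -> : str_hom T' = comp_hom (comp_hom g i) (str_hom S).
  by apply: rhom_ext => r /=; rewrite !hom_strP.
rewrite mmap_comp; have [_ [_ p3]] := Hw; have [_ [_ p3']] := Hw'.
rewrite (p3 S T' (id_hom S) (comp_hom g i) (comp_hom g i) (fun _ => erefl)).
rewrite (p3' S T' (id_hom S) (comp_hom g i) (comp_hom g i) (fun _ => erefl)).
by rewrite Hag.
Qed.

Definition wF (N : RMod R) (F : forall S : ralg R, mcar M S -> dual_family N S)
  (T : ralg R) (n : mcar N T) : dual_family M T :=
  fun T' j x => F T' x T' (id_hom T') (mmap j n).

Lemma wFP {N F T} n : is_hom_to_dual F -> is_dual_elt (@wF N F T n).
Proof.
move=> [H1 [H2 [H3 H4]]]; split; [|split]; rewrite /wF.
- move=> T' j x y; exact: H2.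
- move=> T' j a x; exact: H3.
- move=> T1 T2 i1 i2 g E x.
  rewrite (H4 T1 T2 g x T2 (id_hom T2) g (fun _ => erefl)).
  have [_ [_ p3]] := H1 T1 x.
  rewrite -(p3 T1 T2 (id_hom T1) g g (fun _ => erefl)) -mmap_comp.
  by rewrite (rhom_ext (comp_hom g i1) i2 E).
Qed.

End Aux.

Theorem theorem3p8 (R : comPzRingType) (M : RMod R) :
  dually_separated M <->
  (forall (N : RMod R) (F F' : forall S : ralg R, mcar M S -> dual_family N S),
     is_hom_to_dual F -> is_hom_to_dual F' ->
     (forall (m : mcar M (base_alg R)) (T : ralg R) (i : rhom (base_alg R) T)
             (n : mcar N T),
        F (base_alg R) m T i n = F' (base_alg R) m T i n) ->
     forall (S : ralg R) (m : mcar M S) (T : ralg R) (i : rhom S T) (n : mcar N T),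
       F S m T i n = F' S m T i n).
Proof.
split.
- move=> DS N F F' HF HF' Hag S m T i n.
  have step1 : forall G, is_hom_to_dual G ->
      G S m T i n = G T (mmap i m) T (id_hom T) n.
    move=> G [_ [_ [_ H4]]].
    by rewrite (H4 S T i m T (id_hom T) i (fun _ => erefl)).
  rewrite (step1 F HF) (step1 F' HF').
  have Hagw : forall m0 : mcar M (base_alg R),
      wF N F T n T (id_hom T) (mmap (str_hom T) m0) = wF N F' T n T (id_hom T) (mmap (str_hom T) m0).
    move=> m0; rewrite /wF !mmap_id.
    have [_ [_ [_ H4]]] := HF; have [_ [_ [_ H4']]] := HF'.
    rewrite (H4 (base_alg R) T (str_hom T) m0 T (id_hom T) (str_hom T) (fun _ => erefl)).
    rewrite (H4' (base_alg R) T (str_hom T) m0 T (id_hom T) (str_hom T) (fun _ => erefl)).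
    exact: Hag.
  have := DS T _ _ (wFP n HF) (wFP n HF') Hagw T (id_hom T) (mmap i m).
  by rewrite /wF !mmap_id.
- move=> H S w w' Hw Hw' Hag T i x.
  have key := H (@NMod R M) (Fsel true) (Fsel false) (FselP true) (FselP false).
  have Hag' : forall (m : mcar M (base_alg R)) (T' : ralg R) (i' : rhom (base_alg R) T')
      (n : mcar (@NMod R M) T'),
      Fsel true (base_alg R) m T' i' n = Fsel false (base_alg R) m T' i' n.
    move=> m T' i' n; rewrite /Fsel.
    rewrite (rhom_ext i' (str_hom T') (fun r => hom_strP i' r)).
    by case: n => [[a b] [_ [_ Hab]]] /=; exact: Hab.
  have := key Hag' T x T (id_hom T) (exist _ _ (njP i w w' Hw Hw' Hag)).
  by rewrite /Fsel /sel /= /dfmap mmap_id comp_idl.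
Qed.
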